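(* Let $k$ be a field, $V$ a $k$-vector space and $\varphi,\psi\in\mathrm{End}_k(V)$ finite potent endomorphisms such that the commutator $\varphi\psi-\psi\varphi$ has finite rank. Then $\varphi+\psi$ is finite potent.
   Context: An endomorphism $\varphi$ of $V$ is finite potent if $\varphi^nV$ is finite dimensional for some $n$. *)

(* Defs.v *)
From mathcomp Require Import all_boot all_order all_algebra.
Set Implicit Arguments. Unset Strict Implicit. Unset Printing Implicit Defensive.
Import GRing.Theory.
Local Open Scope ring_scope.

Definition in_span (k : fieldType) (V : lmodType k) (s : seq V) (v : V) : Prop :=
  exists c : 'I_(size s) -> k, v = \sum_(i < size s) c i *: s`_i.

Definition fin_dim_range (k : fieldType) (V : lmodType k) (f : V -> V) : Prop :=
  exists s : seq V, forall v : V, (exists w : V, v = f w) <-> in_span s v.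

Definition finite_potent (k : fieldType) (V : lmodType k) (f : V -> V) : Prop :=
  exists n : nat, fin_dim_range (iter n f).

(* Main.v *)
Require Import Defs.
From mathcomp Require Import all_boot all_order all_algebra.
From mathcomp Require Import zify.
From Stdlib Require Import Classical.
Set Implicit Arguments. Unset Strict Implicit. Unset Printing Implicit Defensive.
Import GRing.Theory.
Local Open Scope ring_scope.

Section Aux.
Variables (k : fieldType) (V : lmodType k).

Definition lin (f : V -> V) := forall (a : k) (u v : V), f (a *: u + v) = a *: f u + f v.

Lemma lin0 f : lin f -> f 0 = 0.
Proof. move=> hf; have := hf 1 0 0; rewrite !scale1r addr0 => h.
by apply: (addrI (f 0)); rewrite addr0 -h. Qed.
Lemma linD f u v : lin f -> f (u + v) = f u + f v.
Proof. by move=> hf; have := hf 1 u v; rewrite !scale1r. Qed.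
Lemma linZ f a u : lin f -> f (a *: u) = a *: f u.
Proof. by move=> hf; have := hf a u 0; rewrite !addr0 (lin0 hf) addr0. Qed.
Lemma linN f u : lin f -> f (- u) = - f u.
Proof. by move=> hf; rewrite -scaleN1r (linZ _ _ hf) scaleN1r. Qed.
Lemma linB f u v : lin f -> f (u - v) = f u - f v.
Proof. by move=> hf; rewrite (linD _ _ hf) (linN _ hf). Qed.
Lemma lin_iter f n : lin f -> lin (iter n f).
Proof. move=> hf; elim: n => [|n IH] a u v //=. by rewrite IH hf. Qed.

Fixpoint spanr (s : seq V) (v : V) : Prop :=
  match s with [::] => v = 0 | x :: s' => exists a, spanr s' (v - a *: x) end.

Lemma spanr0 s : spanr s 0.
Proof. elim: s => [|x s IH] //=; exists 0; by rewrite scale0r subr0. Qed.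
Lemma spanrD s u v : spanr s u -> spanr s v -> spanr s (u + v).
Proof.
elim: s u v => [|x s IH] u v /=; first by move=> -> ->; rewrite addr0.
move=> [a ha] [b hb]; exists (a + b).
have -> : u + v - (a + b) *: x = (u - a *: x) + (v - b *: x)
  by rewrite scalerDl opprD addrACA.
exact: IH.
Qed.
Lemma spanrZ s c u : spanr s u -> spanr s (c *: u).
Proof.
elim: s u => [|x s IH] u /=; first by move=> ->; rewrite scaler0.
move=> [a ha]; exists (c * a); rewrite -scalerA -scalerBr; exact: IH.
Qed.
Lemma spanrN s u : spanr s u -> spanr s (- u).
Proof. by move=> h; rewrite -scaleN1r; apply: spanrZ. Qed.
Lemma spanrB s u v : spanr s u -> spanr s v -> spanr s (u - v).
Proof. by move=> hu hv; apply: spanrD => //; apply: spanrN. Qed.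
Lemma spanr_cat s t u v : spanr s u -> spanr t v -> spanr (s ++ t) (u + v).
Proof.
elim: s u => [|x s IH] u /=; first by move=> ->; rewrite add0r.
move=> [a ha] hv; exists a; rewrite addrAC; exact: IH.
Qed.
Lemma spanr_map f s u : lin f -> spanr s u -> spanr (map f s) (f u).
Proof.
move=> hf; elim: s u => [|x s IH] u /=; first by move=> ->; rewrite lin0.
move=> [a ha]; exists a; rewrite -(linZ _ _ hf) -(linB _ _ hf); exact: IH.
Qed.

Lemma in_spanP s v : in_span s v <-> spanr s v.
Proof.
elim: s v => [|x s IH] v /=.
  split; first by move=> [c ->]; rewrite big_ord0.
  by move=> ->; exists (fun _ => 0); rewrite big_ord0.
split.
  move=> [c ->]; exists (c ord0); apply/IH.
  exists (fun i => c (lift ord0 i)).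
  rewrite big_ord_recl /= -/size addrAC subrr add0r.
  by apply: eq_bigr => i _; rewrite add0n.
move=> [a /IH [c hc]].
exists (fun i => oapp c a (unlift ord0 i)).
rewrite big_ord_recl /= unlift_none /=.
rewrite -[v](subrK (a *: x)) hc addrC; congr (_ + _).
by apply: eq_bigr => i _; rewrite liftK.
Qed.

Lemma subspace_fin (s : seq V) (P : V -> Prop) : P 0 ->
  (forall a u v, P u -> P v -> P (a *: u + v)) ->
  (forall v, P v -> spanr s v) -> exists t, forall v, P v <-> spanr t v.
Proof.
elim: s P => [|x s IH] P P0 hP hs.
  exists [::] => v; split; first exact: hs.
  by move=> /= ->.
case: (classic (exists p0, P p0 /\ ~ spanr s p0)).
  move=> [p0 [Pp0 np0]].
  have [b hb] := hs p0 Pp0.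
  have bn0 : b != 0.
    apply/eqP => b0; apply: np0; move: hb; by rewrite b0 scale0r subr0.
  have [t ht] : exists t, forall v, (P v /\ spanr s v) <-> spanr t v.
    apply: IH.
  - by split; [exact: P0 | exact: spanr0].
  - move=> a u v [Pu su] [Pv sv]; split; first exact: hP.
    by apply: spanrD => //; apply: spanrZ.
  - by move=> v [].
  exists (p0 :: t) => v; split.
    move=> Pv; have [a ha] := hs v Pv; exists (a / b); apply/ht; split.
      by have := hP (-(a/b)) p0 v Pp0 Pv; rewrite scaleNr addrC.
    have -> : v - (a / b) *: p0 = (v - a *: x) - (a / b) *: (p0 - b *: x).
      by rewrite scalerBr scalerA divfK // opprB addrA subrK.
    by apply: spanrB => //; apply: spanrZ.
  move=> [al /ht [Pv' _]].
  by have := hP al p0 _ Pp0 Pv'; rewrite addrC subrK.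
move=> hno.
have hs' : forall v, P v -> spanr s v.
  move=> v Pv; apply: NNPP => nv; apply: hno; by exists v.
exact: IH.
Qed.

Definition fr (f : V -> V) := exists s, forall w, spanr s (f w).

Lemma fdr_of_fr f : lin f -> fr f -> fin_dim_range f.
Proof.
move=> hf [s hs].
have [t ht] : exists t, forall v, (exists w, v = f w) <-> spanr t v.
  apply: (@subspace_fin s).
- by exists 0; rewrite lin0.
- by move=> a u v [w1 ->] [w2 ->]; exists (a *: w1 + w2); rewrite hf.
- by move=> v [w ->].
by exists t => v; rewrite in_spanP; apply: ht.
Qed.

Lemma fr_of_fdr f : fin_dim_range f -> fr f.
Proof. by move=> [s hs]; exists s => w; apply/in_spanP/hs; exists w. Qed.

Lemma frD f g : fr f -> fr g -> fr (fun v => f v + g v).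
Proof. by move=> [s hs] [t ht]; exists (s ++ t) => w; apply: spanr_cat. Qed.
Lemma frN f : fr f -> fr (fun v => - f v).
Proof. by move=> [s hs]; exists s => w; apply: spanrN. Qed.
Lemma fr_comp_r f g : fr f -> fr (fun v => f (g v)).
Proof. by move=> [s hs]; exists s. Qed.
Lemma fr_comp_l f g : lin g -> fr f -> fr (fun v => g (f v)).
Proof. by move=> hg [s hs]; exists (map g s) => w; apply: spanr_map. Qed.
Lemma fr_ext f g : (forall v, f v = g v) -> fr f -> fr g.
Proof. by move=> e [s hs]; exists s => w; rewrite -e. Qed.
Lemma fr_pow f n m : lin f -> fr (iter n f) -> (n <= m)%N -> fr (iter m f).
Proof.
move=> hf h nm; apply: (@fr_ext (fun v => iter (m - n) f (iter n f v))).
  by move=> v; rewrite -iterD subnK.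
exact: fr_comp_l (lin_iter _ hf) h.
Qed.

Section Main.
Variables (A B : V -> V) (hA : lin A) (hB : lin B) (N : nat).
Hypotheses (frA : fr (iter N A)) (frB : fr (iter N B))
  (hc : fr (fun v => A (B v) - B (A v))).
Let X := fun v => A v + B v.
Lemma linX : lin X.
Proof. by move=> a u v; rewrite /X hA hB scalerDr addrACA. Qed.

Lemma comm1 : fr (fun v => X (A v) - A (X v)).
Proof.
apply: fr_ext (frN hc) => v.
by rewrite /X (linD _ _ hA) opprB opprD addrACA subrr add0r.
Qed.

Lemma commm m : fr (fun v => iter m X (A v) - A (iter m X v)).
Proof.
elim: m => [|m IH].
  by exists [::] => w /=; rewrite subrr.
apply: fr_ext (frD (fr_comp_l linX IH) (fr_comp_r (iter m X) comm1)) => v /=.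
by rewrite (linB _ _ linX) addrA subrK.
Qed.

Lemma mainl m : forall a b, (N + N <= (a + b + m).+1)%N ->
  fr (fun v => iter a A (iter m X (iter b B v))).
Proof.
elim: m => [|m IH] a b h.
  case: (leqP N a) => ha.
    by apply: fr_ext (fr_comp_r (iter b B) (fr_pow hA frA ha)).
  have hb : (N <= b)%N by lia.
  exact: fr_comp_l (lin_iter _ hA) (fr_pow hB frB hb).
have T1 := IH a.+1 b ltac:(lia).
have T3 := IH a b.+1 ltac:(lia).
have T2 := fr_comp_l (lin_iter a hA) (fr_comp_r (iter b B) (commm m)).
apply: fr_ext (frD (frD T1 T2) T3) => v /=.
rewrite -(iterS a A) -(iterS m X) (iterSr a A) (iterSr m X) /X.
rewrite (linB _ _ (lin_iter a hA)) !(linD _ _ (lin_iter _ linX)) (linD _ _ (lin_iter a hA)).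
by rewrite (addrC (iter a A (A _))) subrK.
Qed.

Lemma main_fp : fin_dim_range (iter (N + N) X).
Proof.
apply: fdr_of_fr; first exact: lin_iter linX.
apply: fr_ext (mainl (m:=N + N) (a:=0) (b:=0) _) => //; lia.
Qed.
End Main.

End Aux.

Theorem lemma3p3 (k : fieldType) (V : lmodType k) (phi psi : {linear V -> V}) :
  finite_potent phi -> finite_potent psi ->
  fin_dim_range (fun v => phi (psi v) - psi (phi v)) ->
  finite_potent (fun v => phi v + psi v).
Proof.
move=> [n1 h1] [n2 h2] hc.
have lphi : lin (phi : V -> V) by move=> a u v; rewrite linearP.
have lpsi : lin (psi : V -> V) by move=> a u v; rewrite linearP.
exists ((n1 + n2) + (n1 + n2)).
apply: (main_fp lphi lpsi).
- exact: fr_pow lphi (fr_of_fdr h1) (leq_addr _ _).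
- exact: fr_pow lpsi (fr_of_fdr h2) (leq_addl _ _).
- exact: fr_of_fdr hc.
Qed.
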